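(* Let $R$ be a unital ring with involution and let $a,b\in R$ both be core invertible with $a\overset{\circledast}{\leq} b$. Then: (1) $ba^{\circledast}=ab^{\circledast}$ and $a^{\circledast}b=b^{\circledast}a$; (2) $b^{\circledast}ba^{\circledast}=a^{\circledast}bb^{\circledast}=a^{\circledast}ba^{\circledast}=a^{\circledast}$; (3) $b^{\circledast}aa^{\circledast}=a^{\circledast}ab^{\circledast}=b^{\circledast}ab^{\circledast}=a^{\circledast}$.
   Context: $R$ is a ring with identity and an involution $x\mapsto x^{*}$. An element $a\in R$ is core invertible if there exists $x\in R$ with $axa=a$, $xR=aR$ and $Rx=Ra^{*}$; such $x$ is unique, called the core inverse of $a$ and denoted $a^{\circledast}$. For $a$ core invertible and $b\in R$, $a\overset{\circledast}{\leq} b$ means $a^{\circledast}a=a^{\circledast}b$ and $aa^{\circledast}=ba^{\circledast}$. *)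

(* Defs.v *)
From HB Require Import structures.
From mathcomp Require Import all_boot all_order all_algebra.
Set Implicit Arguments. Unset Strict Implicit. Unset Printing Implicit Defensive.
Import GRing.Theory.
Local Open Scope ring_scope.

Definition is_involution (R : pzRingType) (inv : R -> R) : Prop :=
  (forall x y : R, inv (x + y) = inv x + inv y) /\
  (forall x y : R, inv (x * y) = inv y * inv x) /\
  (forall x : R, inv (inv x) = x).

Definition right_ideal_eq (R : pzRingType) (x a : R) : Prop :=
  forall z : R, (exists r, z = x * r) <-> (exists r, z = a * r).
Definition left_ideal_eq (R : pzRingType) (x a : R) : Prop :=
  forall z : R, (exists r, z = r * x) <-> (exists r, z = r * a).

Definition core_inverse (R : pzRingType) (inv : R -> R) (a x : R) : Prop :=
  a * x * a = a /\ right_ideal_eq x a /\ left_ideal_eq x (inv a).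

Definition core_invertible (R : pzRingType) (inv : R -> R) (a : R) : Prop :=
  exists x, core_inverse inv a x.

(* Core partial order a <=# b, where ac is the core inverse of a:
   ac a = ac b and a ac = b ac. *)
Definition core_le (R : pzRingType) (ac a b : R) : Prop :=
  ac * a = ac * b /\ a * ac = b * ac.

(* Main.v *)
Require Import Defs.
From HB Require Import structures.
From mathcomp Require Import all_boot all_order all_algebra.
Import GRing.Theory.
Local Open Scope ring_scope.

Lemma core_facts (R : pzRingType) (inv : R -> R) (a x : R) :
  is_involution inv -> core_inverse inv a x ->
  [/\ x * a * x = x, inv (a * x) = a * x, x * a * a = a & exists r, x = a * r].
Proof.
move=> [iD [iM iK]] [axa [Hr Hl]].
have [r1 xr1] : exists r, x = a * r by apply: (proj1 (Hr x)); exists 1; rewrite mulr1.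
have [r2 ar2] : exists r, a = x * r by apply: (proj2 (Hr a)); exists 1; rewrite mulr1.
have [s xs] : exists r, x = r * inv a by apply: (proj1 (Hl x)); exists 1; rewrite mul1r.
have ia : inv a * inv x * inv a = inv a by rewrite -mulrA -iM -iM axa.
have x1 : x = x * inv (a * x) by rewrite iM mulrA {1}xs -{1}ia !mulrA -xs.
have hx : inv (a * x) = a * x.
  have e : a * x = (a * x) * inv (a * x) by rewrite -mulrA -x1.
  by rewrite {1}e iM iK.
split.
- by rewrite -mulrA -hx -x1.
- exact: hx.
- have xax : x * a * x = x by rewrite -mulrA -hx -x1.
  by rewrite {2}ar2 mulrA xax -ar2.
- by exists r1.
Qed.

Theorem theorem2p6 (R : pzRingType) (inv : R -> R) (a b ac bc : R) :
  is_involution inv ->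
  core_inverse inv a ac ->
  core_inverse inv b bc ->
  core_le ac a b ->
  [/\ (b * ac = a * bc /\ ac * b = bc * a),
      (bc * b * ac = ac /\ ac * b * bc = ac /\ ac * b * ac = ac)
    & (bc * a * ac = ac /\ ac * a * bc = ac /\ bc * a * bc = ac)].
Proof.
move=> Hi Ha Hb [l1 l2].
have [iD [iM iK]] := Hi.
have [aca ha aa [r1 ar1]] := @core_facts R inv a ac Hi Ha.
have [bcb hb bb [r2 br2]] := @core_facts R inv b bc Hi Hb.
have [axa _] := Ha. have [bxb _] := Hb.
have qp : b * bc * (a * ac) = a * ac by rewrite l2 !mulrA bxb.
have pq : a * ac * (b * bc) = a * ac.
  by rewrite -{1}ha -hb -iM qp ha.
have e1 : a * ac = a * bc.
  by rewrite -{1}pq mulrA -[a * ac * b]mulrA -l1 !mulrA axa.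
have acq : ac * (b * bc) = ac.
  by rewrite -{2}aca -[ac * a * ac]mulrA -pq !mulrA aca.
have acbb : ac = b * (ac * ac).
  by rewrite {1}ar1 -{1}axa l2 -!mulrA -ar1.
have bba : bc * b * ac = ac.
  by rewrite {1}acbb !mulrA bb -mulrA -acbb.
have e2 : bc * a = ac * a.
  by rewrite -{1}axa l2 !mulrA bba.
split.
- split; first by rewrite -l2 e1.
  by rewrite -l1 e2.
- split; first exact: bba.
  split; first by rewrite -mulrA acq.
  by rewrite -l1 aca.
- split; first by rewrite e2 aca.
  split; first by rewrite l1 -mulrA acq.
  by rewrite e2 l1 -mulrA acq.
Qed.
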